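(* Let $G$ be a signed digraph none of whose connected components is a signed cycle. Then $\lambda(G)=\max_\ell\lambda(G_\ell)$ and $\beta(G)=\max_\ell\beta(G_\ell)$, where $G_1,\dots,G_k$ are the connected components of $G$, and there exists a degree-bounded finite dynamical system $f:X\to X$ on $G$ such that $f^{\lambda(G)+\beta(G)}$ is a constant map.
   Context: A finite dynamical system (FDS) with $n$ components is a map $f=(f_1,\dots,f_n):X\to X$ where $X=X_1\times\cdots\times X_n$ and each $X_i$ is a nonempty finite interval of integers; $f^k$ is the $k$-fold composition. A signed digraph is a pair $G=(V,E)$ with $E\subseteq V\times V\times\{+,-\}$; $(j,i,s)\in E$ is an arc from $j$ to $i$ of sign $s$ (loops allowed; $G$ may have both a positive and a negative arc from $j$ to $i$, called parallel arcs). Write $G_i$ for the set of $j$ having an arc to $i$. In-degree $d^{\mathrm{in}}_G(i)$ and out-degree $d^{\mathrm{out}}_G(i)$ count arcs entering/leaving $i$, positive and negative arcs counted separately. Connected components are those of the underlying undirected graph. The underlying unsigned digraph $|G|$ has vertex set $V$ and an arc from $j$ to $i$ iff $j\in G_i$; $G$ is a signed cycle if $|G|$ is a directed cycle (through all vertices, each exactly once; a single vertex with a loop counts) and $G$ has no parallel arcs. A strong component is a maximal $U\subseteq V$ with $G[U]$ strongly connected; it is initial if no arc goes from $V\setminus U$ to $U$, trivial if $G[U]$ has one vertex and no arc. $G$ is basic if all its initial strong components are trivial; $\beta(G)=0$ if $G$ is basic, $1$ otherwise. $d_G(j,i)$ is the minimum number of arcs of a directed path from $j$ to $i$ ($0$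 if $j=i$, $\infty$ if none), $d_G(U,i)=\min_{j\in U}d_G(j,i)$, and with $\mathcal I$ the set of initial strong components, $\lambda(G)=\max_{i\in V}\min_{U\in\mathcal I}(d_G(U,i)+|U|)$. The interaction graph of an FDS $f$ is the signed digraph on $\{1,\dots,n\}$ with a positive (resp. negative) arc from $j$ to $i$ iff there is $x\in X$ with $x_j<\max(X_j)$ and $f_i(x+e_j)-f_i(x)$ positive (resp. negative), $e_j$ the $j$-th unit vector; $f$ is an FDS on $G$ if $G$ is its interaction graph. $f$ is degree-bounded if, with $G$ its interaction graph, for every $i$: $|X_i|=2$ if $d^{\mathrm{out}}_G(i)=0<d^{\mathrm{in}}_G(i)$, and $|X_i|\le d^{\mathrm{out}}_G(i)+1$ otherwise. *)

(* Defs.v *)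
From HB Require Import structures.
From mathcomp Require Import all_boot all_order all_algebra.
From Stdlib Require Import ClassicalEpsilon.
Set Implicit Arguments. Unset Strict Implicit. Unset Printing Implicit Defensive.
Import Order.TTheory GRing.Theory Num.Theory.

(* A signed digraph on vertex set 'I_n : a set of arcs (j, i, s), meaning an
   arc from j to i of sign s (s = true : positive, s = false : negative). *)
Definition arcset (n : nat) := {set 'I_n * 'I_n * bool}.

Section SignedDigraph.
Variable n : nat.
Implicit Types (E : arcset n) (W U : {set 'I_n}) (i j : 'I_n).

Definition arcW W E : rel 'I_n :=
  fun j i => [&& j \in W, i \in W & ((j, i, true) \in E) || ((j, i, false) \in E)].

Definition usym E : rel 'I_n := fun x y => arcW setT E x y || arcW setT E y x.
Definition components E : {set {set 'I_n}} :=
  [set [set j | connect (usym E) i j] | i : 'I_n].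

(* G[W] is a signed cycle: |G[W]| is a directed cycle through all vertices
   of W, each exactly once (a loop on a single vertex counts), and G[W] has no
   parallel arcs. *)
Definition signed_cycle W E : Prop :=
  (exists s : seq 'I_n, [/\ s != [::], uniq s, W =i s &
      forall j i, j \in W -> i \in W -> arcW W E j i = (i == next s j)]) /\
  (forall j i, j \in W -> i \in W -> ~~ (((j, i, true) \in E) && ((j, i, false) \in E))).

Definition restr W E U : rel 'I_n := fun x y => [&& x \in U, y \in U & arcW W E x y].
Definition strongly_connected W E (U : {set 'I_n}) : bool :=
  (U != set0) && [forall j in U, forall i in U, connect (restr W E U) j i].
Definition strong_component W E U : bool :=
  (U \subset W) && maxset (fun U' => (U' \subset W) && strongly_connected W E U') U.
Definition initial_sc W E U : bool :=
  strong_component W E U &&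
  [forall j, forall i, ((j \in W) && (j \notin U) && (i \in U)) ==> ~~ arcW W E j i].
Definition trivial_sc W E U : bool :=
  (#|U| == 1) && [forall j in U, forall i in U, ~~ arcW W E j i].
Definition basic W E : bool :=
  [forall U, initial_sc W E U ==> trivial_sc W E U].
Definition beta W E : nat := if basic W E then 0 else 1.

(* walks of length k in G[W] and distances, with None standing for infinity *)
Fixpoint walk W E (k : nat) (j i : 'I_n) : bool :=
  match k with
  | 0 => j == i
  | k'.+1 => [exists l, arcW W E j l && walk W E k' l i]
  end.
Definition dist W E j i : option nat :=
  match excluded_middle_informative (exists k, walk W E k j i) with
  | left H => Some (ex_minn H)
  | right _ => None
  end.

Definition omin (a b : option nat) : option nat :=
  match a, b with
  | None, _ => b | _, None => a | Some x, Some y => Some (minn x y) end.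
Definition omax (a b : option nat) : option nat :=
  match a, b with
  | Some x, Some y => Some (maxn x y) | _, _ => None end.
Definition oaddn (a : option nat) (c : nat) : option nat := omap (addn^~ c) a.

Definition distU W E U i : option nat := \big[omin/None]_(j in U) dist W E j i.
Definition lambda W E : option nat :=
  \big[omax/Some 0]_(i in W)
     \big[omin/None]_(U : {set 'I_n} | initial_sc W E U) oaddn (distU W E U i) #|U|.

(* degrees, positive and negative arcs counted separately *)
Definition dout E i : nat := #|[set a in E | a.1.1 == i]|.
Definition din E i : nat := #|[set a in E | a.1.2 == i]|.

(* finite dynamical systems: X = prod_i [lo i, hi i] (integer intervals) *)
Local Open Scope ring_scope.
Definition inX (lo hi : 'I_n -> int) (x : {ffun 'I_n -> int}) : bool :=
  [forall i, (lo i <= x i) && (x i <= hi i)].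
Definition shift (x : {ffun 'I_n -> int}) j : {ffun 'I_n -> int} :=
  [ffun k => x k + (k == j)%:R].

Definition interaction_graph_is (lo hi : 'I_n -> int)
    (f : {ffun 'I_n -> int} -> {ffun 'I_n -> int}) E : Prop :=
  forall j i (s : bool), (j, i, s) \in E <->
    exists x, [/\ inX lo hi x, x j < hi j &
      if s then 0 < f (shift x j) i - f x i else f (shift x j) i - f x i < 0].

Definition degree_bounded (lo hi : 'I_n -> int) E : Prop :=
  forall i, if ((dout E i == 0)%N && (0 < din E i)%N)
            then hi i - lo i + 1 = 2
            else hi i - lo i + 1 <= (dout E i).+1%:Z.
End SignedDigraph.

(* Main.v *)
Require Import Defs.
From HB Require Import structures.
From mathcomp Require Import all_boot all_order all_algebra.
From mathcomp Require Import zify.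
From Stdlib Require Import ClassicalEpsilon.
Import Order.TTheory GRing.Theory Num.Theory.
Set Implicit Arguments. Unset Strict Implicit. Unset Printing Implicit Defensive.

Definition ole (a b : option nat) : bool :=
  match a, b with _, None => true | None, Some _ => false | Some x, Some y => (x <= y)%N end.

Lemma ominA : associative omin.
Proof. by case=> [a|] [b|] [c|] //=; rewrite minnA. Qed.
Lemma ominC : commutative omin.
Proof. by case=> [a|] [b|] //=; rewrite minnC. Qed.
Lemma omin0 : left_id None omin.
Proof. by case. Qed.
HB.instance Definition _ := Monoid.isComLaw.Build (option nat) None omin ominA ominC omin0.

Lemma omaxA : associative omax.
Proof. by case=> [a|] [b|] [c|] //=; rewrite maxnA. Qed.
Lemma omaxC : commutative omax.
Proof. by case=> [a|] [b|] //=; rewrite maxnC. Qed.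
Lemma omax0 : left_id (Some 0%N) omax.
Proof. by case=> //= a; rewrite max0n. Qed.
HB.instance Definition _ := Monoid.isComLaw.Build (option nat) (Some 0%N) omax omaxA omaxC omax0.

Section BigO.
Variables (I : finType) (P : pred I) (F : I -> option nat).

Lemma big_omin_le i : P i -> ole (\big[omin/None]_(i | P i) F i) (F i).
Proof.
move=> Pi; rewrite (bigD1 i) //=.
case: (F i) => [a|] //; case: (\big[omin/None]_(j | P j && (j != i)) F j) => [b|] //=.
exact: geq_minl.
Qed.

Lemma big_omin_ex m : \big[omin/None]_(i | P i) F i = Some m ->
  exists2 i, P i & F i = Some m.
Proof.
have: \big[omin/None]_(i | P i) F i = None \/
      exists2 i, P i & F i = \big[omin/None]_(i | P i) F i.
  apply: (big_rec (fun b => b = None \/ exists2 i, P i & F i = b)); first by left.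
  move=> i b Pi [->|[j Pj <-]]; first by right; exists i => //; case: (F i).
  right; case E1: (F i) => [x|]; case E2: (F j) => [y|] /=; try by exists j.
  - case: (leqP x y) => h.
      by exists i => //; rewrite E1 /= (minn_idPl h).
    by exists j => //; rewrite E2 /= (minn_idPr (ltnW h)).
  - by exists i.
move=> [-> //|[i Pi <-] Fi]; by exists i.
Qed.

Lemma big_omin_None : \big[omin/None]_(i | P i) F i = None -> forall i, P i -> F i = None.
Proof. by move=> h i /big_omin_le; rewrite h; case: (F i). Qed.

Lemma big_omin_geq m : (forall i, P i -> ole (Some m) (F i)) ->
  ole (Some m) (\big[omin/None]_(i | P i) F i).
Proof.
move=> h; case E: (\big[omin/None]_(i | P i) F i) => [x|] //.
by case/big_omin_ex: E => i /h; case: (F i) => // y + [<-].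
Qed.

Lemma big_omax_bound L : (forall i, P i -> exists2 v, F i = Some v & (v <= L)%N) ->
  exists2 M, \big[omax/Some 0%N]_(i | P i) F i = Some M & (M <= L)%N.
Proof.
move=> h; apply: (big_rec (fun b => exists2 M, b = Some M & (M <= L)%N)).
  by exists 0%N.
move=> i b Pi [M -> hM]; case: (h i Pi) => v -> hv; exists (maxn v M) => //.
by rewrite geq_max hv hM.
Qed.

Lemma big_omax_ge M i : \big[omax/Some 0%N]_(i | P i) F i = Some M -> P i ->
  exists2 v, F i = Some v & (v <= M)%N.
Proof.
move=> + Pi; rewrite (bigD1 i) //=.
case: (F i) => [a|] //; case: (\big[omax/Some 0%N]_(j | P j && (j != i)) F j) => [b|] //= [<-].
by exists a => //; apply: leq_maxl.
Qed.
End BigO.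

Section Walks.
Variables (n : nat) (E : arcset n).
Implicit Types (W U : {set 'I_n}) (i j : 'I_n).

Lemma walk_cat W a b j k i : walk W E a j k -> walk W E b k i -> walk W E (a + b) j i.
Proof.
elim: a j => [|a IH] j /=; first by move/eqP->.
by case/existsP=> l /andP[jl wl] wb; apply/existsP; exists l; rewrite jl IH.
Qed.

Lemma walk_last W m j i : walk W E m.+1 j i -> exists2 p, walk W E m j p & arcW W E p i.
Proof.
elim: m j => [|m IH] j /=.
  by case/existsP=> l /andP[jl /eqP<-]; exists j.
case/existsP=> l /andP[jl wl]; case: (IH l wl) => p wp pi.
by exists p => //; apply/existsP; exists l; rewrite jl.
Qed.

Lemma walk_snoc W m j p i : walk W E m j p -> arcW W E p i -> walk W E m.+1 j i.
Proof.
move=> wp pi; rewrite -addn1; apply: (walk_cat wp) => /=.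
by apply/existsP; exists i; rewrite pi eqxx.
Qed.

Lemma dist_Some W j i m : dist W E j i = Some m ->
  walk W E m j i /\ forall k, walk W E k j i -> (m <= k)%N.
Proof.
rewrite /dist; case: excluded_middle_informative => // H [<-].
by case: (ex_minnP H) => m0 w mmin; by [].
Qed.

Lemma dist_None W j i : dist W E j i = None -> forall k, ~~ walk W E k j i.
Proof.
rewrite /dist; case: excluded_middle_informative => // H _ k.
by apply/negP=> w; apply: H; exists k.
Qed.

Lemma dist_of_walk W k j i : walk W E k j i -> exists2 m, dist W E j i = Some m & (m <= k)%N.
Proof.
move=> w; case E1: (dist W E j i) => [m|]; last by move: (dist_None E1 k); rewrite w.
by exists m => //; case: (dist_Some E1) => _; apply.
Qed.

Lemma dist_ext W W' j i : (forall k, walk W E k j i = walk W' E k j i) ->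
  dist W E j i = dist W' E j i.
Proof.
move=> h; case E1: (dist W E j i) => [m|].
  case: (dist_Some E1) => w1 m1; rewrite h in w1.
  case: (dist_of_walk w1) => m' E2 le'; rewrite E2; congr Some.
  case: (dist_Some E2) => w2 _; rewrite -h in w2.
  by apply/eqP; rewrite eqn_leq le' m1.
case E2: (dist W' E j i) => [m|] //.
by case: (dist_Some E2) => w2 _; move: (dist_None E1 m); rewrite h w2.
Qed.

Lemma dist_self W j : dist W E j j = Some 0%N.
Proof.
have w : walk W E 0 j j by rewrite /= eqxx.
by case: (dist_of_walk w) => m -> ; rewrite leqn0 => /eqP->.
Qed.

Lemma dist_neq W j i m : dist W E j i = Some m -> j != i -> (0 < m)%N.
Proof.
case/dist_Some=> w _; case: m w => //= /eqP-> ; by rewrite eqxx.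
Qed.

Definition ar : rel 'I_n := arcW setT E.

Lemma arE j i : ar j i = ((j, i, true) \in E) || ((j, i, false) \in E).
Proof. by rewrite /ar /arcW !inE. Qed.

Lemma walk_connect k j i : walk setT E k j i -> connect ar j i.
Proof.
elim: k j => [|k IH] j /=; first by move/eqP->.
case/existsP=> l /andP[jl wl]; exact: connect_trans (connect1 jl) (IH _ wl).
Qed.

Lemma path_walk (e : rel 'I_n) a p : subrel e ar -> path e a p ->
  walk setT E (size p) a (last a p).
Proof.
move=> sub; elim: p a => [|b p IH] a /=; first by rewrite eqxx.
case/andP=> ab pb; apply/existsP; exists b; rewrite IH // andbT.
exact: sub.
Qed.

Lemma connect_walk j i : connect ar j i -> exists k, walk setT E k j i.
Proof.
case/connectP=> p pp ->; exists (size p); exact: (@path_walk ar).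
Qed.

End Walks.

Section SC.
Variables (n : nat) (E : arcset n).
Implicit Types (U : {set 'I_n}) (i j a b : 'I_n).
Local Notation ar := (ar E).

Definition scc j : {set 'I_n} := [set k | connect ar j k && connect ar k j].
Definition isSource u := [forall j, ~~ ar j u].

Lemma restr_sub U : subrel (restr setT E U) ar.
Proof. by move=> x y /and3P[]. Qed.

Lemma restr_connect U a b : connect (restr setT E U) a b -> connect ar a b.
Proof. apply: connect_sub => x y /restr_sub; exact: connect1. Qed.

Lemma init_pred U a b : initial_sc setT E U -> ar a b -> b \in U -> a \in U.
Proof.
case/andP=> _ /forallP h ab bU; apply/negPn/negP=> aU.
by move: (h a) => /forallP /(_ b) /implyP; rewrite in_setT aU bU => /(_ isT) /negP; apply.
Qed.

Lemma init_closed U a b : initial_sc setT E U -> connect ar a b -> b \in U -> a \in U.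
Proof.
move=> iU /connectP[p pp ->]; elim: p a pp => [|c p IH] a //= /andP[ac pc] lU.
exact: (init_pred iU ac (IH _ pc lU)).
Qed.

Lemma sc_connect U a b : strongly_connected setT E U -> a \in U -> b \in U ->
  connect ar a b.
Proof.
case/andP=> _ /forallP h aU bU; move: (h a); rewrite aU => /forallP /(_ b).
rewrite bU /=; exact: restr_connect.
Qed.

Lemma connect_restr U a b : a \in U -> connect ar a b ->
  (forall x, connect ar a x -> connect ar x b -> x \in U) ->
  connect (restr setT E U) a b.
Proof.
move=> aU /connectP[p pp ->]; elim: p a aU pp => [|c p IH] a aU //= /andP[ac pc] h.
have cU : c \in U by apply: h; [exact: connect1|by apply/connectP; exists p].
apply: (connect_trans (connect1 _) (IH c cU pc _)); first by rewrite /restr aU cU.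
move=> x cx xb; apply: h => //; exact: connect_trans (connect1 ac) cx.
Qed.

Lemma scc_id j : j \in scc j.
Proof. by rewrite inE connect0. Qed.

Lemma scc_sc j : strongly_connected setT E (scc j).
Proof.
apply/andP; split; first by apply/set0Pn; exists j; exact: scc_id.
apply/forallP=> a; apply/implyP=> aS; apply/forallP=> b; apply/implyP=> bS.
apply: connect_restr => //.
  by move: aS bS; rewrite !inE => /andP[ja aj] /andP[jb bj]; exact: connect_trans aj jb.
move=> x ax xb; move: aS bS; rewrite !inE => /andP[ja aj] /andP[jb bj].
by rewrite (connect_trans ja ax) (connect_trans xb bj).
Qed.

Lemma sc_scc U j : strongly_connected setT E U -> j \in U -> U \subset scc j.
Proof.
move=> sU jU; apply/subsetP=> x xU; rewrite inE.
by rewrite (sc_connect sU jU xU) (sc_connect sU xU jU).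
Qed.

Lemma scc_strong j : strong_component setT E (scc j).
Proof.
rewrite /strong_component subsetT /=; apply/maxsetP; split.
  by rewrite subsetT scc_sc.
move=> B /andP[_ sB] sub; apply/eqP; rewrite eqEsubset sub andbT.
by apply: sc_scc => //; apply: (subsetP sub); exact: scc_id.
Qed.

Lemma strong_sc U : strong_component setT E U -> strongly_connected setT E U.
Proof. by case/andP=> _ /maxsetp /andP[]. Qed.

Lemma strong_eq_scc U j : strong_component setT E U -> j \in U -> U = scc j.
Proof.
move=> sU jU; have s1 := sc_scc (strong_sc sU) jU.
case/andP: sU => _ /maxsetP[_ mx].
by apply/esym; apply: mx => //; rewrite subsetT scc_sc.
Qed.

Lemma exists_initial i : exists U, exists2 j, initial_sc setT E U & j \in U /\ connect ar j i.
Proof.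
pose anc j := [set k | connect ar k j].
have Pi : connect ar i i by exact: connect0.
case: (@arg_minnP _ i (fun j => connect ar j i) (fun j => #|anc j|) Pi) => j ji jmin.
exists (scc j); exists j; last by rewrite scc_id.
rewrite /initial_sc scc_strong /=; apply/forallP=> a; apply/forallP=> b.
apply/implyP=> /andP[/andP[_ aS] bS]; apply/negP=> ab.
move: bS; rewrite inE => /andP[jb bj].
have aj : connect ar a j := connect_trans (connect1 ab) bj.
have ai : connect ar a i := connect_trans aj ji.
have ja : ~~ connect ar j a by apply: contra aS => ja; rewrite inE ja aj.
have : anc a \proper anc j.
  rewrite properE; apply/andP; split.
    by apply/subsetP=> x; rewrite !inE => xa; exact: connect_trans xa aj.
  apply/subsetPn; exists j; first by rewrite inE connect0.
  by rewrite inE.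
move/proper_card; rewrite ltnNge; by rewrite jmin.
Qed.

Lemma path_restr_all U a p : path (restr setT E U) a p -> all (mem U) p.
Proof.
elim: p a => [|c p IH] a //= /andP[/and3P[_ cU _] pc]; rewrite cU /=; exact: IH pc.
Qed.

Lemma sc_walk_bound U r j : strongly_connected setT E U -> r \in U -> j \in U ->
  exists2 k, walk setT E k r j & (k < #|U|)%N.
Proof.
case/andP=> _ /forallP h rU jU; move: (h r); rewrite rU => /forallP /(_ j).
rewrite jU /= => /connectP[p pp ->].
case: (shortenP pp) => p' pp' up' _.
exists (size p'); first exact: (@path_walk _ _ (restr setT E U) _ _ (@restr_sub U)).
have sub : {subset r :: p' <= enum U}.
  move=> x; rewrite mem_enum inE => /orP[/eqP->//|xp].
  by move: (path_restr_all pp') => /allP /(_ x xp).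
by have := uniq_leq_size up' sub; rewrite -cardE.
Qed.

Lemma trivial_init_source U : initial_sc setT E U -> trivial_sc setT E U ->
  exists2 u, U = [set u] & isSource u.
Proof.
move=> iU /andP[/cards1P[u Uu] /forallP nl]; subst U; exists u => //.
apply/forallP=> j; case: (eqVneq j u) => [->|ju].
  by move: (nl u) => /implyP; rewrite set11 => /(_ isT) /forallP /(_ u); rewrite set11.
by apply/negP=> ab; move: (init_pred iU ab (set11 u)); rewrite inE (negbTE ju).
Qed.

End SC.

Section Hub.
Variables (n : nat) (E : arcset n).
Implicit Types (U : {set 'I_n}) (i j a b q r : 'I_n).
Local Notation ar := (ar E).

Lemma dout_two q r r' (s s' : bool) : (q, r, s) \in E -> (q, r', s') \in E ->
  (r, s) != (r', s') -> (1 < dout E q)%N.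
Proof.
move=> h1 h2 d; apply/card_gt1P; exists (q, r, s), (q, r', s').
rewrite !inE h1 h2 /= eqxx; split=> //.
by apply: contra d => /eqP [-> ->].
Qed.

Lemma dout_pos q r : ar q r -> (0 < dout E q)%N.
Proof.
rewrite arE => h; apply/card_gt0P.
by case/orP: h => h; [exists (q, r, true)|exists (q, r, false)]; rewrite !inE h /=.
Qed.

Lemma din_pos q r : ar q r -> (0 < din E r)%N.
Proof.
rewrite arE => h; apply/card_gt0P.
by case/orP: h => h; [exists (q, r, true)|exists (q, r, false)]; rewrite !inE h /=.
Qed.

Lemma dout1_uniq q r r' : (dout E q <= 1)%N -> ar q r -> ar q r' -> r = r'.
Proof.
move=> d; rewrite !arE => h1 h2; apply/eqP/negPn/negP=> ne.
have : (1 < dout E q)%N.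
  case/orP: h1 => h1; case/orP: h2 => h2; apply: (dout_two h1 h2);
    by apply: contra ne => /eqP [->].
by rewrite ltnNge d.
Qed.

Lemma dout1_npar q r : (dout E q <= 1)%N ->
  ~~ (((q, r, true) \in E) && ((q, r, false) \in E)).
Proof.
move=> d; apply/negP=> /andP[h1 h2].
have d2 : (r, true) != (r, false) by rewrite xpair_eqE eqxx.
by have := dout_two h1 h2 d2; rewrite ltnNge d.
Qed.

Definition usym_sub a b : ar a b -> usym E a b.
Proof. by move=> h; apply/orP; left. Qed.

Hypothesis nc : forall W, W \in components E -> ~ signed_cycle W E.

Lemma out_in_U U q : initial_sc setT E U -> ~~ trivial_sc setT E U -> q \in U ->
  exists2 r, ar q r & r \in U.
Proof.
move=> iU ntU qU; have sU := strong_sc (andP iU).1.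
case: (eqVneq #|U| 1%N) => [/eqP/cards1P[u Uu]|c1].
  subst U; move: qU; rewrite inE => /eqP->.
  move: ntU; rewrite /trivial_sc cards1 /= => /forallPn[x].
  rewrite negb_imply inE => /andP[/eqP-> /forallPn[y]].
  rewrite negb_imply negbK inE => /andP[/eqP-> uu]; by exists u; rewrite ?set11.
have : (1 < #|U|)%N.
  by rewrite ltn_neqAle eq_sym c1 /=; apply/card_gt0P; exists q.
case/card_gt1P=> x [y [xU yU xy]].
have [v vU vq] : exists2 v, v \in U & v != q.
  case: (eqVneq x q) => [xq|xq]; last by exists x.
  by exists y => //; rewrite -xq eq_sym.
case/andP: sU => _ /forallP /(_ q); rewrite qU => /forallP /(_ v); rewrite vU /=.
case/connectP=> [[|c p]] /=; first by move=> _ vq'; move: vq; rewrite vq' eqxx.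
by case/andP=> /and3P[_ cU qc] _ _; exists c.
Qed.

Lemma hub_exists U : initial_sc setT E U -> ~~ trivial_sc setT E U ->
  exists2 q, q \in U & (1 < dout E q)%N && [exists r, ar q r && connect ar r q].
Proof.
move=> iU ntU; have sU := strong_sc (andP iU).1.
have back q : q \in U -> [exists r, ar q r && connect ar r q].
  move=> qU; case: (out_in_U iU ntU qU) => r qr rU; apply/existsP; exists r.
  by rewrite qr (sc_connect sU rU qU).
case: (boolP [exists q in U, 1 < dout E q]%N) => [/existsP[q /andP[qU dq]]|nh].
  by exists q => //; rewrite dq back.
have d1 q : q \in U -> (dout E q <= 1)%N.
  move=> qU; rewrite leqNgt; apply: contra nh => h; apply/existsP; exists q; by rewrite qU.
exfalso.
pose succ q := odflt q [pick r | ar q r].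
have succP q : q \in U -> ar q (succ q) /\ succ q \in U.
  move=> qU; case: (out_in_U iU ntU qU) => r qr rU; rewrite /succ.
  case: pickP => [r' qr' /=|/(_ r)]; last by rewrite qr.
  by rewrite -(dout1_uniq (d1 q qU) qr qr').
have succU q r : q \in U -> ar q r -> r = succ q.
  move=> qU qr; case: (succP q qU) => qs _; exact: dout1_uniq (d1 q qU) qr qs.
case/andP: sU => /set0Pn[q0 q0U] _.
pose W := [set j | connect (usym E) q0 j].
have closedU a b : a \in U -> usym E a b -> b \in U.
  move=> aU /orP[ab|ba]; first by rewrite (succU a b aU ab); case: (succP a aU).
  exact: init_pred iU ba aU.
have cl a x : a \in U -> connect (usym E) a x -> x \in U.
  move=> + /connectP[p pp ->]; elim: p a pp => [|c p IH] a //= /andP[ac pc] aU.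
  exact: IH pc (closedU a c aU ac).
have WU : W = U.
  apply/setP=> x; rewrite inE; apply/idP/idP; first exact: cl.
  move=> xU; apply: connect_sub (sc_connect (strong_sc (andP iU).1) q0U xU).
  by move=> a b ab; apply: connect1; apply: usym_sub.
have Wc : W \in components E by apply/imsetP; exists q0.
apply: (nc Wc); rewrite WU; split; last first.
  move=> j i jU _; exact: dout1_npar (d1 j jU).
have clS a x : a \in U -> fconnect succ a x -> x \in U.
  move=> + /connectP[p pp ->]; elim: p a pp => [|c p IH] a //= /andP[/eqP ac pc] aU.
  by apply: IH pc _; rewrite -ac; case: (succP a aU).
have fUa a0 x : a0 \in U -> fconnect succ a0 x = (x \in U).
  move=> a0U; apply/idP/idP; first exact: clS.
  move=> xU; have := strong_sc (andP iU).1 => /andP[_ /forallP /(_ a0)].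
  rewrite a0U => /forallP /(_ x); rewrite xU /=; apply: connect_sub.
  move=> a b /and3P[aU _ ab]; apply: connect1; rewrite /= /frel.
  by rewrite -(succU a b aU ab).
have fU x : fconnect succ q0 x = (x \in U) by exact: fUa.
have cyc : fcycle succ (orbit succ q0).
  by rewrite -fconnect_f fUa //; case: (succP q0 q0U).
exists (orbit succ q0); split.
- by apply/eqP=> h; move: (in_orbit succ q0); rewrite h.
- exact: orbit_uniq.
- by move=> x; rewrite -fconnect_orbit fU.
move=> j i jU iiU.
have -> : arcW U E j i = ar j i by rewrite /ar /arcW jU iiU !in_setT.
have jo : j \in orbit succ q0 by rewrite -fconnect_orbit fU.
have := next_cycle cyc jo; rewrite /= /frel => /eqP <-.
apply/idP/idP; first by move=> ji; rewrite (succU j i jU ji).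
by move/eqP->; case: (succP j jU).
Qed.
End Hub.

Section Comp.
Variables (n : nat) (E : arcset n).
Implicit Types (U W : {set 'I_n}) (i j a b : 'I_n).
Local Notation ar := (ar E).

Definition comp i : {set 'I_n} := [set j | connect (usym E) i j].

Lemma usym_symm : symmetric (usym E).
Proof. by move=> x y; rewrite /usym orbC. Qed.

Lemma csym : connect_sym (usym E).
Proof. exact: sym_connect_sym usym_symm. Qed.

Lemma comp_id i : i \in comp i.
Proof. by rewrite inE connect0. Qed.

Lemma comp_eq i j : j \in comp i -> comp j = comp i.
Proof.
rewrite inE => ij; apply/setP=> x; rewrite !inE; apply/idP/idP => h.
  exact: connect_trans ij h.
by rewrite csym in ij; exact: connect_trans ij h.
Qed.

Lemma compsP W : reflect (exists i, W = comp i) (W \in components E).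
Proof. by apply: (iffP imsetP) => [[i _ ->]|[i ->]]; exists i. Qed.

Lemma connect_usym a b : connect ar a b -> connect (usym E) a b.
Proof. apply: connect_sub => x y h; apply: connect1; exact: usym_sub h. Qed.

Lemma comp_closed i a b : connect ar a b -> (a \in comp i) = (b \in comp i).
Proof.
move/connect_usym => ab; rewrite !inE; apply/idP/idP => h.
  exact: connect_trans h ab.
by rewrite csym in ab; exact: connect_trans h ab.
Qed.

Section OneComp.
Variable i0 : 'I_n.
Local Notation W := (comp i0).

Lemma arcW_comp j l : j \in W -> arcW W E j l = ar j l.
Proof.
move=> jW; rewrite /ar /arcW jW !in_setT /=; case: (boolP (l \in W)) => //= lW.
apply/esym/negbTE; apply: contra lW => h.
have h' : ar j l by rewrite arE.
by rewrite -(comp_closed i0 (connect1 h')).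
Qed.

Lemma walk_comp k j i : j \in W -> walk W E k j i = walk setT E k j i.
Proof.
elim: k j => [|k IH] j jW //=; apply: eq_existsb => l.
rewrite arcW_comp // /ar; case: (boolP (arcW setT E j l)) => //= jl.
have lW : l \in W by rewrite -(comp_closed i0 (connect1 (jl : ar j l))).
by rewrite IH.
Qed.

Lemma dist_comp j i : j \in W -> dist W E j i = dist setT E j i.
Proof. by move=> jW; apply: dist_ext => k; rewrite walk_comp. Qed.

Lemma restr_comp U : U \subset W -> restr W E U =2 restr setT E U.
Proof.
move=> sub x y; rewrite /restr; case: (boolP (x \in U)) => //= xU.
by case: (boolP (y \in U)) => //= yU; rewrite arcW_comp // (subsetP sub).
Qed.

Lemma sc_comp U : U \subset W -> strongly_connected W E U = strongly_connected setT E U.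
Proof.
move=> sub; rewrite /strongly_connected; congr (_ && _).
apply: eq_forallb_in => x _; apply: eq_forallb_in => y _; exact: (eq_connect (restr_comp sub)).
Qed.

Lemma sc_in_comp U j : strongly_connected setT E U -> j \in U -> j \in W -> U \subset W.
Proof.
move=> sU jU jW; apply/subsetP=> u uU.
by rewrite -(comp_closed i0 (sc_connect sU jU uU)).
Qed.

Lemma strong_comp U : strong_component W E U = (U \subset W) && strong_component setT E U.
Proof.
rewrite /strong_component; case: (boolP (U \subset W)) => //= sub; rewrite subsetT /=.
rewrite (@maxset_eq _ (fun U' => (U' \subset W) && strongly_connected W E U')
   (fun U' => (U' \subset W) && strongly_connected setT E U')); last first.
  by move=> U' /=; case: (boolP (U' \subset W)) => //= s'; rewrite sc_comp.
apply/maxsetP/maxsetP => [[/andP[_ sU] mx]|[/andP[_ sU] mx]].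
  split; first by rewrite subsetT.
  move=> B /andP[_ sB] UB; apply: mx => //; rewrite sB andbT.
  case/andP: sU => /set0Pn[u uU] _.
  by apply: (sc_in_comp sB (subsetP UB u uU)); apply: (subsetP sub).
split; first by rewrite sub.
by move=> B /andP[_ sB] UB; apply: mx => //; rewrite subsetT.
Qed.

Lemma init_comp U : initial_sc W E U = (U \subset W) && initial_sc setT E U.
Proof.
rewrite /initial_sc strong_comp; case: (boolP (U \subset W)) => //= sub.
case: (strong_component setT E U) => //=.
apply/forallP/forallP => h j; apply/forallP=> i; apply/implyP=> /andP[/andP[jW jU] iU];
  move: (h j) => /forallP /(_ i) /implyP.
- case: (boolP (j \in W)) => jW' /=.
    by rewrite jU iU arcW_comp // => /(_ isT).
  move=> _; apply/negP=> ji; move: jW'.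
  by rewrite (comp_closed i0 (connect1 (ji : ar j i))) (subsetP sub i iU).
- by rewrite jU iU in_setT arcW_comp // => /(_ isT).
Qed.

Lemma triv_comp U : U \subset W -> trivial_sc W E U = trivial_sc setT E U.
Proof.
move=> sub; rewrite /trivial_sc; congr (_ && _).
apply: eq_forallb_in => j jU; apply: eq_forallb_in => i iU.
by rewrite arcW_comp // (subsetP sub).
Qed.

Lemma distU_out U i : i \in W -> initial_sc setT E U -> ~~ (U \subset W) ->
  distU setT E U i = None.
Proof.
move=> iW iU nsub; rewrite /distU big1 // => j jU.
case E1: (dist setT E j i) => [m|] //.
case: (dist_Some E1) => w _; have ji := walk_connect w.
have jW : j \in W by rewrite (comp_closed i0 ji).
by move: nsub; rewrite (sc_in_comp (strong_sc (andP iU).1) jU jW).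
Qed.

Lemma delta_comp i : i \in W ->
  \big[omin/None]_(U | initial_sc W E U) oaddn (distU W E U i) #|U| =
  \big[omin/None]_(U | initial_sc setT E U) oaddn (distU setT E U i) #|U|.
Proof.
move=> iW; rewrite [RHS](bigID (fun U => U \subset W)) /=.
rewrite [X in omin _ X]big1; last first.
  by move=> U /andP[iU nsub]; rewrite distU_out.
rewrite ominC omin0; apply: eq_big => U; first by rewrite init_comp andbC.
move=> iWU; have sub : U \subset W by move: iWU; rewrite init_comp => /andP[].
congr oaddn; apply: eq_bigr => j jU.
by rewrite dist_comp // (subsetP sub).
Qed.
End OneComp.

Lemma lambda_comp : lambda setT E = \big[omax/Some 0%N]_(W in components E) lambda W E.
Proof.
rewrite /lambda (partition_big comp (mem (components E))); last first.
  by move=> i _; apply/compsP; exists i.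
apply: eq_bigr => W /compsP[i0 ->]; apply: eq_big => i.
  by rewrite in_setT /=; apply/eqP/idP => [<-|/comp_eq//]; exact: comp_id.
by move=> /andP[_ /eqP <-]; rewrite delta_comp // comp_id.
Qed.

Lemma basic_comp : basic setT E = [forall W in components E, basic W E].
Proof.
apply/forallP/forallP => h W.
  apply/implyP=> /compsP[i0 ->]; apply/forallP=> U; apply/implyP.
  rewrite init_comp => /andP[sub iU]; rewrite triv_comp //.
  by move: (h U); rewrite iU.
move: (h W) => _; apply/implyP=> iU.
case/andP: (strong_sc (andP iU).1) => /set0Pn[u uU] _.
have sub : W \subset comp u by apply: (sc_in_comp (strong_sc (andP iU).1) uU); exact: comp_id.
move: (h (comp u)) => /implyP; rewrite (_ : comp u \in components E); last first.
  by apply/compsP; exists u.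
move=> /(_ isT) /forallP /(_ W); rewrite init_comp sub iU /= triv_comp //; exact.
Qed.

Lemma beta_comp : beta setT E = (\max_(W in components E) beta W E)%N.
Proof.
rewrite /beta basic_comp; case: (boolP [forall W in _, _]) => [/forallP h|/forallPn[W]].
  apply/esym/eqP; rewrite -leqn0; apply/bigmax_leqP => W WC.
  by move: (h W); rewrite WC /= => ->.
rewrite negb_imply => /andP[WC nb]; apply/eqP; rewrite eqn_leq; apply/andP; split.
  by apply: (leq_trans _ (leq_bigmax_cond _ WC)); rewrite (negbTE nb).
by apply/bigmax_leqP => W' _; case: (basic W' E).
Qed.

End Comp.

Definition pat := (bool * bool * bool)%type.
Definition lA (A : pat) (v : nat) : bool :=
  match v with 0 => A.1.1 | 1 => A.1.2 | 2 => A.2 | _ => false end.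
Definition incP k (A : pat) := ((1 < k)%N && ~~ lA A 0 && lA A 1) || ((2 < k)%N && ~~ lA A 1 && lA A 2).
Definition incM k (A : pat) := ((1 < k)%N && lA A 0 && ~~ lA A 1) || ((2 < k)%N && lA A 1 && ~~ lA A 2).
Definition zok k (z : nat) (A : pat) := ~~ (z < k)%N || ~~ lA A z.
Definition good k (dp dm : bool) (z1 z2 : nat) (A : pat) :=
  (incP k A == dp) && (incM k A == dm) && zok k z1 A && zok k z2 A.
Definition pats : seq pat :=
  [:: (false,false,true); (false,true,false); (false,true,true); (true,false,false);
      (true,false,true); (true,true,false)].
Definition pick_pat k dp dm z1 z2 : pat :=
  head (true,true,true) [seq A <- pats | good k dp dm z1 z2 A].
Definition ex_pat k dp dm z1 z2 := has (good k dp dm z1 z2) pats.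

Lemma pick_patP k dp dm z1 z2 : ex_pat k dp dm z1 z2 -> good k dp dm z1 z2 (pick_pat k dp dm z1 z2).
Proof.
rewrite /ex_pat /pick_pat; elim: pats => //= A s IH.
by case: ifP => //= _ /IH.
Qed.

Definition kof (b : bool) : nat := if b then 3 else 2.

Lemma LA_check (b sp sm : bool) (z : nat) : (z < kof b)%N -> sp || sm -> (sp && sm ==> b) ->
  ex_pat (kof b) sp sm z z || ex_pat (kof b) sm sp z z.
Proof.
by case: b; case: sp; case: sm; case: z => [|[|[|z]]] //.
Qed.

Lemma LB_check (b sp sm : bool) : sp || sm -> (sp && sm ==> b) ->
  ex_pat (kof b) sp sm 3 3 && ex_pat (kof b) sm sp 3 3.
Proof. by case: b; case: sp; case: sm. Qed.

Lemma LC_check (sp sm : bool) : sp || sm ->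
  ex_pat 3 sp sm 0 (if sp && sm then 2 else 1) || ex_pat 3 sm sp 0 (if sp && sm then 2 else 1).
Proof. by case: sp; case: sm. Qed.

Section Construction.
Variables (n : nat) (E : arcset n).
Implicit Types (i j p q r s : 'I_n).
Local Notation ar := (ar E).

Definition kk i : nat :=
  if (1 < dout E i)%N then 3 else if (dout E i == 1)%N || (0 < din E i)%N then 2 else 1.
Definition hub q := (1 < dout E q)%N && [exists r, ar q r && connect ar r q].
Definition rsel q := odflt q [pick r | ar q r && connect ar r q].
Definition special r := [exists q, hub q && (rsel q == r)].
Definition qsel r := odflt r [pick q | hub q && (rsel q == r)].
Definition seed i := isSource E i || special i.
Definition wt i : nat := if isSource E i then 1 else 2.
Definition tau i : option nat := \big[omin/None]_(s | seed s) oaddn (dist setT E s i) (wt s).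
Definition olt (a b : option nat) :=
  match a, b with Some x, Some y => (x < y)%N | _, _ => false end.
Definition par i := odflt i [pick p | ar p i && olt (tau p) (tau i)].

Definition sp j i := (j, i, true) \in E.
Definition sm j i := (j, i, false) \in E.
Definition both q := sp q (rsel q) && sm q (rsel q).
Definition mm i : nat := if kk i == 3 then (if hub i && both i then 2 else 1) else (kk i).-1.

Definition ori_ns i (cp : nat) := ex_pat (kk (par i)) (sp (par i) i) (sm (par i) i) cp cp.
Definition ori_sp r := ex_pat (kk (qsel r)) (sp (qsel r) r) (sm (qsel r) r) 0 (mm (qsel r)).
Definition cval i (o : bool) : nat := if o then 0 else mm i.
Definition dval i (o : bool) : nat := if o then mm i else 0.

Fixpoint ofu (m : nat) i : bool :=
  match m with
  | 0 => true
  | m'.+1 => if isSource E i then true else if special i then ori_sp i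
             else ori_ns i (cval (par i) (ofu m' (par i)))
  end.
Definition ori i := ofu (odflt 0 (tau i)) i.
Definition cc i := cval i (ori i).
Definition dd i := dval i (ori i).

Definition zz i j : nat * nat :=
  if special i && (j == qsel i) then (0, mm j)
  else if ~~ seed i && (j == par i) then (cc j, cc j) else (3, 3).
Definition dpm i j : bool * bool := if ori i then (sp j i, sm j i) else (sm j i, sp j i).
Definition Ael i j : pat := pick_pat (kk j) (dpm i j).1 (dpm i j).2 (zz i j).1 (zz i j).2.
Definition lsel i j (v : int) : bool := if ar j i then lA (Ael i j) `|v|%N else true.

Definition ff (x : {ffun 'I_n -> int}) : {ffun 'I_n -> int} :=
  [ffun i => if isSource E i then Posz 0
             else if [forall j, lsel i j (x j)] then Posz (dd i) else Posz (cc i)].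
Definition lo (i : 'I_n) : int := Posz 0.
Definition hi (i : 'I_n) : int := Posz (kk i).-1.

Lemma wt_ge1 s : (1 <= wt s)%N.
Proof. by rewrite /wt; case: ifP. Qed.

Lemma tau_spec i t : tau i = Some t ->
  exists s, [/\ seed s, dist setT E s i = Some (t - wt s)%N & (wt s <= t)%N].
Proof.
case/big_omin_ex=> s sd; case E1: (dist setT E s i) => [d|] //= [<-].
by exists s; split=> //; rewrite ?addnK ?leq_addl.
Qed.

Lemma tau_spec2 i t : tau i = Some t ->
  exists2 s, seed s & exists2 d, dist setT E s i = Some d & t = (d + wt s)%N.
Proof.
case/big_omin_ex=> s sd; case E1: (dist setT E s i) => [d|] //= [<-].
by exists s => //; exists d.
Qed.

Lemma tau_le s i d : seed s -> dist setT E s i = Some d ->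
  exists2 t, tau i = Some t & (t <= d + wt s)%N.
Proof.
move=> ss E1; have := big_omin_le (fun s => oaddn (dist setT E s i) (wt s)) ss.
rewrite /tau; case: (\big[omin/None]_(s | seed s) _) => [t|]; rewrite E1 //= => h.
by exists t.
Qed.

Lemma tau_ge1 i t : tau i = Some t -> (1 <= t)%N.
Proof. by case/tau_spec2=> s _ [d _ ->]; rewrite addnC ltn_addr // wt_ge1. Qed.

Lemma special_hub r : special r -> hub (qsel r) /\ rsel (qsel r) = r.
Proof.
case/existsP=> q0 h0; rewrite /qsel; case: pickP => [q /andP[hq /eqP rq]|/(_ q0)] //=.
by rewrite h0.
Qed.

Lemma rsel_spec q : hub q -> ar q (rsel q) /\ connect ar (rsel q) q.
Proof.
case/andP=> _ /existsP[r0 h0]; rewrite /rsel; case: pickP => [r /andP[]|/(_ r0)] //=.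
by rewrite h0.
Qed.

Lemma special_arc r : special r -> ar (qsel r) r.
Proof. by case/special_hub=> h e; have := (rsel_spec h).1; rewrite e. Qed.

Lemma source_noarc u j : isSource E u -> ~~ ar j u.
Proof. by move/forallP. Qed.

Lemma special_not_source r : special r -> ~~ isSource E r.
Proof. by move/special_arc=> h; apply/negP=> /forallP /(_ (qsel r)); rewrite h. Qed.

Lemma hub_not_source q : hub q -> ~~ isSource E q.
Proof.
move=> hq; case: (rsel_spec hq) => qr /connectP[p pp e].
apply/negP=> /forallP sq.
case/lastP: p pp e => [|p x] /=.
  by move=> _ e; move: (sq q); rewrite [X in ar q X]e qr.
rewrite last_rcons rcons_path => /andP[_ h] e; rewrite -e in h.
by move: (sq (last (rsel q) p)); rewrite h.
Qed.

Lemma tau_special r t : special r -> tau r = Some t -> (2 <= t)%N.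
Proof.
move=> sr /tau_spec2[s ss [d dd ->]].
case: (eqVneq s r) => [->|sr'].
  by rewrite /wt (negbTE (special_not_source sr)) addn2.
by have := dist_neq dd sr'; case: d {dd} => // d _; rewrite addSn ltnS (leq_trans (wt_ge1 s)) // leq_addl.
Qed.

Lemma tau_par_ex i t : ~~ seed i -> tau i = Some t ->
  exists p, ar p i /\ exists2 t', tau p = Some t' & (t' < t)%N.
Proof.
move=> ns /tau_spec2[s ss [d dd et]].
have si : s != i by apply: contra ns => /eqP <-.
have := dist_neq dd si; case: d dd et => // d dd et _.
case: (dist_Some dd) => /walk_last[p wp pi] _.
exists p; split=> //; case: (dist_of_walk wp) => d' dp le'.
case: (tau_le ss dp) => t' tp le2; exists t' => //.
by rewrite et (leq_ltn_trans le2) // ltn_add2r ltnS.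
Qed.

Lemma par_spec i t : ~~ seed i -> tau i = Some t ->
  ar (par i) i /\ exists2 t', tau (par i) = Some t' & (t' < t)%N.
Proof.
move=> ns ti; case: (tau_par_ex ns ti) => p0 [a0 [t0 e0 l0]].
rewrite /par; case: pickP => [p /andP[pa]|/(_ p0)]; last by rewrite a0 e0 ti /= l0.
rewrite ti; case: (tau p) => // t' /= lt; split=> //; by exists t'.
Qed.


Lemma ofu_stable N : forall i t, tau i = Some t -> (t <= N)%N ->
  forall m, (t <= m)%N -> ofu m i = ofu t i.
Proof.
elim: N => [|N IH] i t ti tN m tm.
  by move: (tau_ge1 ti); rewrite leqNgt (leq_ltn_trans tN).
have t1 := tau_ge1 ti.
case: m tm => [|m] tm; first by move: (leq_trans t1 tm).
case: t t1 tm ti tN => // t _ tm ti tN /=.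
case: (boolP (isSource E i)) => // nso; case: (boolP (special i)) => // nsp.
have ns : ~~ seed i by rewrite /seed (negbTE nso) (negbTE nsp).
case: (par_spec ns ti) => _ [tp ep ltp].
have tpN : (tp <= N)%N by rewrite -ltnS (leq_trans ltp).
have e1 : ofu m (par i) = ofu tp (par i).
  by apply: (IH _ _ ep tpN m); rewrite -ltnS (leq_trans ltp tm).
have e2 : ofu t (par i) = ofu tp (par i) by apply: (IH _ _ ep tpN t); rewrite -ltnS.
by rewrite e1 e2.
Qed.

Lemma ofu_tau i t m : tau i = Some t -> (t <= m)%N -> ofu m i = ori i.
Proof. by move=> ti tm; rewrite /ori ti (ofu_stable ti (leqnn t)). Qed.

Lemma ori_nonseed i t : ~~ seed i -> tau i = Some t -> ori i = ori_ns i (cc (par i)).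
Proof.
move=> ns ti; have t1 := tau_ge1 ti.
move: ns; rewrite /seed negb_or => /andP[nso nsp].
rewrite /ori ti; case: t t1 ti => // t _ ti /=; rewrite (negbTE nso) (negbTE nsp).
have ns : ~~ seed i by rewrite /seed negb_or nso nsp.
case: (par_spec ns ti) => _ [tp ep ltp].
by rewrite /cc (ofu_tau ep).
Qed.

Lemma ori_special r : special r -> ori r = ori_sp r.
Proof.
move=> sr; have sd : seed r by rewrite /seed sr orbT.
case: (tau_le sd (@dist_self _ E setT r)) => t ti _.
have t1 := tau_ge1 ti; rewrite /ori ti; case: t t1 ti => // t _ ti /=.
by rewrite (negbTE (special_not_source sr)) sr.
Qed.

Lemma ori_source u : isSource E u -> ori u = true.
Proof.
move=> su; rewrite /ori; case E1: (tau u) => [t|] //=.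
by case: t E1 => // t _ /=; rewrite su.
Qed.

Lemma kk_out j i : ar j i -> kk j = kof (1 < dout E j)%N.
Proof.
move/dout_pos; rewrite /kk /kof; case: ifP => // h d0.
by rewrite (_ : dout E j = 1)%N //; apply/eqP; rewrite eqn_leq d0 leqNgt h.
Qed.

Lemma kk_pos i : (0 < kk i)%N.
Proof. by rewrite /kk; case: ifP => //; case: ifP. Qed.

Lemma mm_le i : (mm i <= (kk i).-1)%N.
Proof. by rewrite /mm; case: ifP => [/eqP->|//]; case: ifP. Qed.

Lemma cc_le i : (cc i <= (kk i).-1)%N.
Proof. by rewrite /cc /cval; case: ifP => // _; exact: mm_le. Qed.

Lemma dd_le i : (dd i <= (kk i).-1)%N.
Proof. by rewrite /dd /dval; case: ifP => // _; exact: mm_le. Qed.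

Lemma mm_pos i : (1 < kk i)%N -> (0 < mm i)%N.
Proof.
rewrite /mm; case: ifP => [_|]; first by case: ifP.
by case: (kk i) => [|[|k]].
Qed.

Lemma sp_sm_dout j i : sp j i -> sm j i -> (1 < dout E j)%N.
Proof.
move=> h1 h2; apply: (dout_two h1 h2); by rewrite xpair_eqE eqxx.
Qed.

Hypothesis nc : forall W, W \in components E -> ~ signed_cycle W E.

Definition delta i := \big[omin/None]_(U | initial_sc setT E U) oaddn (distU setT E U i) #|U|.

Lemma tau_bound i : exists2 dl, delta i = Some dl &
  exists2 t, tau i = Some t & (t <= dl + beta setT E)%N.
Proof.
have [dl dli] : exists dl, delta i = Some dl.
  case: (exists_initial E i) => U0 [j0 iU0 [j0U /connect_walk[k w]]].
  case: (dist_of_walk w) => d0 e0 _.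
  case E1: (distU setT E U0 i) => [e|]; last first.
    by move: (big_omin_None E1 j0U); rewrite e0.
  have := big_omin_le (fun U => oaddn (distU setT E U i) #|U|) iU0.
  rewrite /delta E1; case: (\big[omin/None]_(U | _) _) => [x|] //= _; by exists x.
exists dl => //.
case/big_omin_ex: dli => U iU; case E1: (distU setT E U i) => [e|] //= [<-].
case/big_omin_ex: E1 => j jU dj.
case: (boolP (trivial_sc setT E U)) => [tU|ntU].
  case: (trivial_init_source iU tU) => u Uu su; move: jU; rewrite Uu inE => /eqP ju.
  subst j; have sd : seed u by rewrite /seed su.
  case: (tau_le sd dj) => t ti tl; exists t => //.
  rewrite /wt su in tl; by rewrite cards1 (leq_trans tl) // leq_addr.
case: (hub_exists nc iU ntU) => q qU hq0; have hq : hub q := hq0.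
case: (rsel_spec hq) => _ rq.
have rU : rsel q \in U := init_closed iU rq qU.
have spr : special (rsel q) by apply/existsP; exists q; rewrite hq eqxx.
have sd : seed (rsel q) by rewrite /seed spr orbT.
case: (sc_walk_bound (strong_sc (andP iU).1) rU jU) => k wk kU.
case: (dist_Some dj) => wj _.
case: (dist_of_walk (walk_cat wk wj)) => d' e' le'.
case: (tau_le sd e') => t ti tl; exists t => //.
have b1 : beta setT E = 1%N.
  rewrite /beta; case: ifP => // /forallP /(_ U); by rewrite iU (negbTE ntU).
rewrite b1 (leq_trans tl) // /wt (negbTE (special_not_source spr)).
apply: (@leq_trans (k + e + 2)); first by rewrite leq_add2r.
move: kU; move: #|U| => u; lia.
Qed.

Lemma tau_fin i : exists t, tau i = Some t.
Proof. by case: (tau_bound i) => dl _ [t ti _]; exists t. Qed.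

Lemma Ael_good i j : ar j i ->
  good (kk j) (dpm i j).1 (dpm i j).2 (zz i j).1 (zz i j).2 (Ael i j).
Proof.
move=> ji; apply: pick_patP.
have val : sp j i || sm j i by rewrite -arE.
have valb : (sp j i && sm j i) ==> (1 < dout E j)%N.
  by apply/implyP=> /andP[]; exact: sp_sm_dout.
rewrite (kk_out ji) /zz /dpm.
case: (boolP (special i && (j == qsel i))) => [/andP[si /eqP ej]|nsq] /=.
  case: (special_hub si) => hq rq; rewrite -ej in hq rq.
  have d2 : (1 < dout E j)%N by case/andP: hq.
  rewrite d2 /= (ori_special si) /ori_sp -ej (kk_out ji) d2 /=.
  have -> : mm j = (if sp j i && sm j i then 2 else 1)%N.
    by rewrite /mm (kk_out ji) d2 /= hq /both rq.
  by case: ifP => // /negbT h; move: (LC_check val); rewrite (negbTE h).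
case: (boolP (~~ seed i && (j == par i))) => [/andP[ns /eqP ej]|nsp] /=.
  case: (tau_fin i) => t ti; rewrite (ori_nonseed ns ti) /ori_ns -ej (kk_out ji).
  have zlt : (cc j < kof (1 < dout E j)%N)%N.
    rewrite -(kk_out ji); apply: (leq_ltn_trans (cc_le j)).
    by rewrite prednK // kk_pos.
  case: ifP => // /negbT h; move: (LA_check zlt val valb); by rewrite (negbTE h).
by case/andP: (LB_check val valb) => h1 h2; case: ifP.
Qed.

Definition posW k A (o : bool) :=
  ((1 < k)%N && (lA A 1 == o) && (lA A 0 != o)) || ((2 < k)%N && (lA A 2 == o) && (lA A 1 != o)).
Definition negW k A (o : bool) :=
  ((1 < k)%N && (lA A 1 != o) && (lA A 0 == o)) || ((2 < k)%N && (lA A 2 != o) && (lA A 1 == o)).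

Lemma posW_eq k A o : posW k A o = (if o then incP k A else incM k A).
Proof.
rewrite /posW /incP /incM; case: o; case: (lA A 0); case: (lA A 1); case: (lA A 2);
  by rewrite ?andbT ?andbF ?orbF.
Qed.

Lemma negW_eq k A o : negW k A o = (if o then incM k A else incP k A).
Proof.
rewrite /negW /incP /incM; case: o; case: (lA A 0); case: (lA A 1); case: (lA A 2);
  by rewrite ?andbT ?andbF ?orbF.
Qed.

Lemma posW_intro k A o v : (v.+1 < k)%N -> (k <= 3)%N -> lA A v.+1 == o -> lA A v != o ->
  posW k A o.
Proof.
rewrite /posW; case: v => [|[|v]] /= vk k3 h1 h2.
- by rewrite vk h1 h2.
- by rewrite vk h1 h2 orbT.
- by move: (leq_trans vk k3).
Qed.

Lemma negW_intro k A o v : (v.+1 < k)%N -> (k <= 3)%N -> lA A v.+1 != o -> lA A v == o ->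
  negW k A o.
Proof.
rewrite /negW; case: v => [|[|v]] /= vk k3 h1 h2.
- by rewrite vk h1 h2.
- by rewrite vk h1 h2 orbT.
- by move: (leq_trans vk k3).
Qed.

Lemma posW_elim k A o : posW k A o ->
  exists v, [/\ (v.+1 < k)%N, lA A v.+1 == o & lA A v != o].
Proof.
by case/orP=> /andP[/andP[h1 h2] h3]; [exists 0%N|exists 1%N].
Qed.

Lemma negW_elim k A o : negW k A o ->
  exists v, [/\ (v.+1 < k)%N, lA A v.+1 != o & lA A v == o].
Proof.
by case/orP=> /andP[/andP[h1 h2] h3]; [exists 0%N|exists 1%N].
Qed.

Lemma kk_le3 i : (kk i <= 3)%N.
Proof. by rewrite /kk; case: ifP => //; case: ifP. Qed.

Lemma good_signs i j : ar j i ->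
  posW (kk j) (Ael i j) (ori i) = sp j i /\ negW (kk j) (Ael i j) (ori i) = sm j i.
Proof.
move=> ji; have := Ael_good ji; rewrite posW_eq negW_eq /good /dpm.
by case/andP=> /andP[/andP[/eqP-> /eqP->] _] _; case: (ori i).
Qed.

Lemma lsel_in i j v : ar j i -> lsel i j (Posz v) = lA (Ael i j) v.
Proof. by rewrite /lsel => ->. Qed.

Lemma tv_ex i j : exists2 v, (v <= (kk j).-1)%N & lsel i j (Posz v).
Proof.
rewrite /lsel; case: (boolP (ar j i)) => ji; last by exists 0%N.
case: (good_signs ji) => hp hm.
have : sp j i || sm j i by rewrite -arE.
case/orP=> [h|h].
  rewrite -hp in h; case/posW_elim: h => v [vk h1 h2].
  case: (boolP (lA (Ael i j) v.+1)) => [a|a].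
    by exists v.+1 => //; rewrite -ltnS prednK // kk_pos.
  exists v; first by rewrite -ltnS prednK ?kk_pos // ltnW.
  by move: h1 h2; rewrite (negbTE a); case: (ori i) => //; case: (lA _ v).
rewrite -hm in h; case/negW_elim: h => v [vk h1 h2].
case: (boolP (lA (Ael i j) v.+1)) => [a|a].
  by exists v.+1 => //; rewrite -ltnS prednK // kk_pos.
exists v; first by rewrite -ltnS prednK ?kk_pos // ltnW.
by move: h1 h2; rewrite (negbTE a); case: (ori i) => //; case: (lA _ v).
Qed.

Definition tv i j : nat := if lsel i j (Posz 0) then 0 else if lsel i j (Posz 1) then 1 else 2.

Lemma tv_spec i j : (tv i j <= (kk j).-1)%N && lsel i j (Posz (tv i j)).
Proof.
case: (tv_ex i j) => v vk lv; rewrite /tv.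
case: ifP => [->|h0]; first by rewrite leq0n.
case: ifP => [h1|h1].
  rewrite h1 andbT; case: v vk lv h0 => [|v] vk lv h0; first by rewrite lv in h0.
  exact: leq_trans _ vk.
case: v vk lv h0 h1 => [|[|[|v]]] vk lv h0 h1.
- by rewrite lv in h0.
- by rewrite lv in h1.
- by rewrite vk lv.
- have := kk_le3 j; move: vk; case: (kk j) => [|[|[|[|k]]]] //=.
Qed.

Local Open Scope ring_scope.

Lemma forall_split (P : 'I_n -> bool) j : [forall j', P j'] = P j && [forall j', (j' != j) ==> P j'].
Proof.
apply/forallP/andP => [h|[h1 /forallP h2] j'].
  by split=> //; apply/forallP=> j'; rewrite h implybT.
by case: (eqVneq j' j) => [->//|ne]; move: (h2 j'); rewrite ne.
Qed.

Lemma Lshift x j i : [forall j', lsel i j' (shift x j j')] =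
  lsel i j (x j + 1) && [forall j', (j' != j) ==> lsel i j' (x j')].
Proof.
rewrite (forall_split _ j) /shift ffunE eqxx; congr (_ && _).
apply: eq_forallb => j'; case: (eqVneq j' j) => //= ne.
by rewrite ffunE (negbTE ne) addr0.
Qed.

Definition gv i (b : bool) : int := Posz (if b then dd i else cc i).

Lemma ffE x i : ff x i = if isSource E i then 0 else gv i [forall j, lsel i j (x j)].
Proof. by rewrite ffunE /gv; case: ifP => //; case: ifP. Qed.

Lemma gv_eq i b : gv i b = if b == ori i then Posz (mm i) else 0.
Proof. by rewrite /gv /dd /cc /dval /cval; case: (ori i); case: b. Qed.

Lemma gv_pos i b' b : (1 < kk i)%N ->
  (0 < gv i b' - gv i b) = (b' == ori i) && (b != ori i).
Proof.
move=> k2; have mp := mm_pos k2; rewrite !gv_eq.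
case: (b' == ori i); case: (b == ori i) => /=.
- by rewrite subrr.
- by rewrite subr0 ltz_nat.
- by rewrite sub0r oppr_gt0 ltz_nat.
- by rewrite subrr.
Qed.

Lemma gv_neg i b' b : (1 < kk i)%N ->
  (gv i b' - gv i b < 0) = (b' != ori i) && (b == ori i).
Proof.
move=> k2; have mp := mm_pos k2; rewrite !gv_eq.
case: (b' == ori i); case: (b == ori i) => /=.
- by rewrite subrr.
- by rewrite subr0 ltz_nat.
- by rewrite sub0r oppr_lt0 ltz_nat.
- by rewrite subrr.
Qed.

Lemma kk_in i j : ar j i -> (1 < kk i)%N.
Proof.
move/din_pos=> d; rewrite /kk; case: ifP => // _; by rewrite d orbT.
Qed.

Lemma inXP x : inX lo hi x -> forall i, exists2 v, x i = Posz v & (v <= (kk i).-1)%N.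
Proof.
move/forallP=> h i; move: (h i); rewrite /lo /hi.
by case: (x i) => [v|v] /andP[// h1 h2]; exists v.
Qed.

Lemma ig : interaction_graph_is lo hi ff E.
Proof.
move=> j i s; split.
  move=> h; have ji : ar j i by rewrite arE; case: s h => ->; rewrite ?orbT.
  have nso : ~~ isSource E i by apply/negP=> /(source_noarc j); rewrite ji.
  case: (good_signs ji) => hp hm.
  have [v [vk h1 h2]] : exists v, [/\ (v.+1 < kk j)%N,
        (lA (Ael i j) v.+1 == ori i) == s & (lA (Ael i j) v == ori i) != s].
    case: s h => h.
      have hs : posW (kk j) (Ael i j) (ori i) by rewrite hp.
      by case: (posW_elim hs) => v [a b c]; exists v; rewrite a b (negbTE c).
    have hs : negW (kk j) (Ael i j) (ori i) by rewrite hm.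
    by case: (negW_elim hs) => v [a b c]; exists v; rewrite a c (negbTE b).
  pose x := [ffun j' => if j' == j then Posz v else Posz (tv i j')].
  have R : [forall j', (j' != j) ==> lsel i j' (x j')].
    apply/forallP=> j'; apply/implyP=> ne; rewrite ffunE (negbTE ne).
    by case/andP: (tv_spec i j').
  exists x; split.
  - apply/forallP=> j'; rewrite ffunE /lo /hi; case: ifP => [/eqP->|_].
      by rewrite lez_nat leq0n lez_nat -ltnS prednK ?kk_pos // ltnW.
    by rewrite lez_nat leq0n lez_nat; case/andP: (tv_spec i j').
  - by rewrite ffunE eqxx /hi ltz_nat -ltnS prednK ?kk_pos.
  rewrite !ffE (negbTE nso) (forall_split (fun j' => lsel i j' (x j')) j) Lshift R !andbT ffunE eqxx.
  have e1 : Posz v + 1 = Posz v.+1 by rewrite -addn1 PoszD.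
  rewrite e1 !lsel_in //.
  case: s h h1 h2 => _ h1 h2.
    by rewrite (gv_pos _ _ (kk_in ji)); rewrite !eqb_id in h1 h2; exact/andP.
  by rewrite (gv_neg _ _ (kk_in ji)); move: h1 h2; case: (lA (Ael i j) v.+1 == ori i); case: (lA (Ael i j) v == ori i).
case=> x [xX xj sg].
case: (boolP (isSource E i)) => [so|nso].
  by move: sg; rewrite !ffE so subrr; case: s.
move: sg; rewrite !ffE (negbTE nso) (forall_split (fun j' => lsel i j' (x j')) j) Lshift.
case: (inXP xX j) => v xv vk; rewrite xv.
have vk' : (v.+1 < kk j)%N.
  by move: xj; rewrite xv /hi ltz_nat -ltnS prednK ?kk_pos.
case: (boolP (ar j i)) => [ji|nji]; last first.
  by rewrite /lsel (negbTE nji) /= subrr; case: s.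
case: (boolP [forall j', (j' != j) ==> lsel i j' (x j')]) => R; last first.
  by rewrite !andbF subrr; case: s.
have e1 : Posz v + 1 = Posz v.+1 by rewrite -addn1 PoszD.
rewrite !andbT e1 !lsel_in //.
case: (good_signs ji) => hp hm.
case: s => sg.
  rewrite (gv_pos _ _ (kk_in ji)) in sg; case/andP: sg => f1 f2.
  have : sp j i by rewrite -hp; exact: (posW_intro vk' (kk_le3 j)).
  by [].
rewrite (gv_neg _ _ (kk_in ji)) in sg; case/andP: sg => f1 f2.
have : sm j i by rewrite -hm; exact: (negW_intro vk' (kk_le3 j)).
by [].
Qed.

Lemma ffX x : inX lo hi (ff x).
Proof.
apply/forallP=> i; rewrite ffE /lo /hi; case: ifP => _; first by rewrite lexx lez_nat leq0n.
rewrite /gv; case: ifP => _; rewrite !lez_nat leq0n ?dd_le ?cc_le //.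
Qed.

Lemma degb : degree_bounded lo hi E.
Proof.
move=> i; have e : hi i - lo i + 1 = Posz (kk i).
  by rewrite /hi /lo subr0 -[1]/(Posz 1) -PoszD addn1 prednK // kk_pos.
rewrite e /kk; move: (dout E i) (din E i) => a b.
case: a => [|[|a]]; case: b => [|b] //=; by rewrite lez_nat.
Qed.

Lemma zok_false k z A : zok k z A -> (z < k)%N -> lA A z = false.
Proof. by rewrite /zok => /orP[/negP//|/negbTE]. Qed.

Lemma conv N : forall i t, tau i = Some t -> (t <= N)%N ->
  forall x m, (t <= m)%N -> iter m ff x i = Posz (cc i).
Proof.
elim: N => [|N IH] i t ti tN x m tm.
  by move: (tau_ge1 ti); rewrite leqNgt (leq_ltn_trans tN).
have t1 := tau_ge1 ti.
case: m tm => [|m] tm; first by move: (leq_trans t1 tm).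
rewrite iterS ffE.
case: (boolP (isSource E i)) => [so|nso]; first by rewrite /cc ori_source.
have Lf : [forall j, lsel i j (iter m ff x j)] = false; last first.
  by rewrite Lf /gv.
case: (boolP (special i)) => [si|nsi].
  pose q := qsel i; have qi := special_arc si.
  case: (special_hub si) => hq rq.
  have d2 : (1 < dout E q)%N by case/andP: hq.
  rewrite (forall_split _ q); apply/negbTE; rewrite negb_and; apply/orP; left.
  have k3 : kk q = 3%N by rewrite /kk d2.
  have := Ael_good qi; rewrite /good /zz si eqxx /= => /andP[/andP[_ z1] z2].
  have m2 : (1 < m.+1)%N by rewrite (leq_trans (tau_special si ti)).
  case: m m2 tm => [|m] // _ _; rewrite iterS ffE (negbTE (hub_not_source hq)) lsel_in //.
  rewrite /gv /dd /cc /dval /cval; case: ifP => _; case: ifP => _.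
  - by rewrite (zok_false z2) // k3 -k3 (leq_ltn_trans (mm_le q)) // prednK // k3.
  - by rewrite (zok_false z1) // k3.
  - by rewrite (zok_false z1) // k3.
  - by rewrite (zok_false z2) // k3 -k3 (leq_ltn_trans (mm_le q)) // prednK // k3.
have ns : ~~ seed i by rewrite /seed (negbTE nso) (negbTE nsi).
case: (par_spec ns ti) => pi [tp ep ltp].
rewrite (forall_split _ (par i)); apply/negbTE; rewrite negb_and; apply/orP; left.
have tpN : (tp <= N)%N by rewrite -ltnS (leq_trans ltp).
rewrite (IH _ _ ep tpN x m); last by rewrite -ltnS (leq_trans ltp tm).
have := Ael_good pi; rewrite /good /zz (negbTE nsi) ns eqxx /= => /andP[_ z2].
rewrite lsel_in // (zok_false z2) //.
by rewrite (leq_ltn_trans (cc_le _)) // prednK // kk_pos.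
Qed.

Lemma big_omax_some (I : finType) (P : pred I) (F : I -> option nat) :
  (forall k : I, P k -> exists v, F k = Some v) ->
  exists M, \big[omax/Some 0%N]_(k | P k) F k = Some M.
Proof.
move=> h; apply: (big_rec (fun b => exists M, b = Some M)); first by exists 0%N.
by move=> k b Pk [M ->]; case: (h k Pk) => v ->; exists (maxn v M).
Qed.

Lemma main_aux :
  exists L : nat, lambda setT E = Some L /\
    exists (lo hi : 'I_n -> int) (f : {ffun 'I_n -> int} -> {ffun 'I_n -> int}),
      [/\ (forall i, (lo i <= hi i)%R),
          (forall x, inX lo hi x -> inX lo hi (f x)),
          interaction_graph_is lo hi f E,
          degree_bounded lo hi E &
          exists c, forall x, inX lo hi x -> iter (L + beta setT E) f x = c].
Proof.
have [L eL] : exists L, lambda setT E = Some L.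
  apply: big_omax_some => i _; case: (tau_bound i) => dl e _; by exists dl.
exists L; split=> //; exists lo, hi, ff; split.
- by move=> i; rewrite /lo /hi lez_nat leq0n.
- by move=> x _; exact: ffX.
- exact: ig.
- exact: degb.
exists [ffun i => Posz (cc i)] => x _; apply/ffunP=> i; rewrite ffunE.
case: (tau_bound i) => dl edl [t ti tle].
case: (big_omax_ge eL (in_setT i)) => v; rewrite -/(delta i) edl => -[<-] vL.
apply: (conv ti (leqnn t)); rewrite (leq_trans tle) // leq_add2r //.
Qed.

End Construction.

Unset Implicit Arguments.

Theorem mainTheorem8 (n : nat) (E : arcset n) :
  (forall W, W \in components E -> ~ signed_cycle W E) ->
  lambda setT E = \big[@omax/Some 0%N]_(W in components E) lambda W E /\
  beta setT E = (\max_(W in components E) beta W E)%N /\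
  exists L : nat, lambda setT E = Some L /\
    exists (lo hi : 'I_n -> int) (f : {ffun 'I_n -> int} -> {ffun 'I_n -> int}),
      [/\ (forall i, (lo i <= hi i)%R),
          (forall x, inX lo hi x -> inX lo hi (f x)),
          interaction_graph_is lo hi f E,
          degree_bounded lo hi E &
          exists c, forall x, inX lo hi x -> iter (L + beta setT E) f x = c].
Proof.
move=> nc; split; first exact: lambda_comp.
split; first exact: beta_comp.
exact: main_aux nc.
Qed.
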